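(* Let $g\ge1$ and let $\mathcal M_{2g+1}$, $V^{(2g+1)}$, the $\mathrm{CS}_2$ flows $\partial/\partial t_j$, $\mathcal M_A$, $\widetilde{\mathcal S}$, $E$ and $\widetilde{\mathcal Q}$ be as in the context. For $i=0,\dots,g-1$ consider the vector field on $\mathcal M_A$ $$\frac{dX(\lambda)}{dt}=\big[(\lambda^{i-g}X(\lambda))_+,X(\lambda)\big],$$ which is tangent to $\widetilde{\mathcal S}$. Then its projection onto $T\widetilde{\mathcal Q}$ along $E$ (according to the splitting $T\widetilde{\mathcal S}=T\widetilde{\mathcal Q}\oplus E$ at points of $\widetilde{\mathcal Q}$) coincides, under the identification of $\mathcal M_{2g+1}$ with $\widetilde{\mathcal Q}$ via $h\mapsto V^{(2g+1)}(h)$, with the $\mathrm{KdV}_{2g+1}$ flow, i.e. with the restriction to $\mathcal M_{2g+1}$ of the $\mathrm{CS}_2$ flow $\partial/\partial t_{2i+1}$. Equivalently, the projections of these vector fields to the quotient $\widetilde{\mathcal N}=\widetilde{\mathcal S}/E$ coincide with the $\mathrm{KdV}_{2g+1}$ systems.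
   Context: Given a formal Laurent series $h=z+\sum_{l\ge1}h_lz^{-l}$, put $\lambda=z^2$ and define $H^{(0)}=1$, $H^{(1)}=h$, $H^{(2)}=z^2$, $H^{(k+2)}=z^2H^{(k)}-H^k_1h-H^k_2$ ($k\ge1$), where $H^k_l$ is the coefficient of $z^{-l}$ in $H^{(k)}$ (so $H^1_l=h_l$). Each $H^{(k)}$ and each series $H^{(j+1)}+\sum_{l=1}^jh_lH^{(j-l)}+H^j_1$ can be written uniquely as $a(\lambda)+b(\lambda)h$ with $a,b$ polynomials. $V^{(j)}$ is the $2\times2$ polynomial matrix with first row $(p_j,q_j)$ where $H^{(j)}=p_j+q_jh$, and second row $(a_j,b_j)$ where $H^{(j+1)}+\sum_{l=1}^jh_lH^{(j-l)}+H^j_1=a_j+b_jh$. The $\mathrm{CS}_2$ flows are $\partial h/\partial t_j=-hH^{(j)}+H^{(j+1)}+\sum_{l=1}^jh_lH^{(j-l)}+H^j_1$; they commute. $\mathcal M_{2g+1}$ is the set of $h$ with $\partial h/\partial t_{2g+1}=0$; it is invariant under all $\mathrm{CS}_2$ flows, coordinatized by $(h_1,\dots,h_{2g+1})$, and the restricted flows form the $\mathrm{KdV}_{2g+1}$ system (the stationary reductions of KdV). $\mathcal M_A=\{X(\lambda)=\lambda^{g+1}A+\sum_{i=0}^g\lambda^iX_i\mid X_i\in\mathfrak{sl}(2)\}$ with $A=\begin{pmatrix}0&0\\1&0\end{pmatrix}$; $H_i$ is the coefficient of $\lambda^i$ in $\tfrac12\mathrm{Tr}\,X(\lambda)^2$;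 $\widetilde{\mathcal S}$ is the submanifold $H_{2g+1}=1$, $H_i=0$ for $g+1\le i\le2g$; $E$ is the rank-one distribution on $\widetilde{\mathcal S}$ spanned by $\dot X(\lambda)=[A,X(\lambda)]$; $\widetilde{\mathcal Q}\subset\widetilde{\mathcal S}$ is the image of $h\mapsto V^{(2g+1)}(h)$ on $\mathcal M_{2g+1}$, which lies in $\widetilde{\mathcal S}$, is injective, and is transversal to $E$. $(\cdot)_+$ denotes projection onto nonnegative powers of $\lambda$. *)

(* Defs.v *)
From HB Require Import structures.
From mathcomp Require Import all_boot all_order all_algebra.
Set Implicit Arguments. Unset Strict Implicit. Unset Printing Implicit Defensive.
Import Order.TTheory GRing.Theory Num.Theory.
Local Open Scope ring_scope.

(* Formal Laurent series in z with finitely many positive powers, represented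
   by their coefficient function: S n = coefficient of z^n.  All series below
   have (explicitly known) upper degree bounds. *)
Definition lser (R : Type) := int -> R.

Definition natp (x : int) : nat := match x with Posz k => k | Negz _ => 0%N end.

Section Series.
Variable R : comNzRingType.

Definition lconst (c : R) : lser R := fun n => if n == 0 then c else 0.

Definition lshift (m : int) (S : lser R) : lser R := fun n => S (n - m).

(* product of two series with degree bounds dS, dT (i.e. S n = 0 for n > dS,
   T n = 0 for n > dT): coefficient of z^n is sum_{m = n-dT}^{dS} S_m T_{n-m} *)
Definition lmul (dS dT : int) (S T : lser R) : lser R :=
  fun n => \sum_(k < natp (dS + dT - n + 1)) S (dS - k%:Z) * T (n - dS + k%:Z).

(* h = z + sum_{l>=1} h_l z^{-l}; the sequence h : nat -> R gives h_l = h l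
   for l >= 1 (h 0 is unused). *)
Definition hser (h : nat -> R) : lser R :=
  fun n => if n == 1 then 1 else match n with Negz k => h k.+1 | _ => 0 end.

(* H^(k): H^(0) = 1, H^(1) = h, H^(2) = z^2,
   H^(k+2) = z^2 H^(k) - H^k_1 h - H^k_2  (k >= 1).  deg H^(k) <= k. *)
Definition Hstep (h : nat -> R) (A : lser R) : lser R :=
  fun n => A (n - 2) - A (- 1) * hser h n - A (- 2) * lconst 1 n.

Fixpoint Hpair (h : nat -> R) (k : nat) : lser R * lser R :=
  match k with
  | 0%N => (lconst 1, hser h)
  | k'.+1 => let p := Hpair h k' in
             if k' == 0%N then (hser h, lshift 2 (lconst 1))
             else (p.2, Hstep h p.1)
  end.

Definition Hser (h : nat -> R) (k : nat) : lser R := (Hpair h k).1.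

Definition Hc (h : nat -> R) (k l : nat) : R := Hser h k (- (l%:Z)).

Definition Sser (h : nat -> R) (j : nat) : lser R :=
  fun n => Hser h j.+1 n + \sum_(1 <= l < j.+1) h l * Hser h (j - l) n
           + Hc h j 1 * lconst 1 n.

Definition flow (h : nat -> R) (j : nat) : lser R :=
  fun n => - lmul 1 j%:Z (hser h) (Hser h j) n + Sser h j n.

(* the flow as a tangent vector in the coordinates h_l: component l is the
   coefficient of z^{-l} (l >= 1; component 0 is irrelevant) *)
Definition flowv (h : nat -> R) (j : nat) : nat -> R :=
  fun l => flow h j (- (l%:Z)).

Definition inM (g : nat) (h : nat -> R) : Prop :=
  forall n : int, flow h (2 * g + 1) n = 0.

(* Writing a series S of degree <= d as a(lambda) + b(lambda) h, lambda = z^2: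
   the (unique) polynomials a, b are read off from the nonnegative part of S,
   peeling the leading power z^k (k = d, ..., 0): an even power z^{2m} goes to
   a as lambda^m, an odd power z^{2m+1} goes to b as lambda^m (since
   lambda^m h = z^{2m+1} + lower). *)
Fixpoint dec_aux (h : nat -> R) (k : nat) (S : lser R) : {poly R} * {poly R} :=
  match k with
  | 0%N => ((S 0)%:P, 0)
  | k'.+1 =>
    let c := S (k'.+1)%:Z in
    let m := (k'.+1)./2 in
    if odd k'.+1 then
      let ab := dec_aux h k' (fun n => S n - c * hser h (n - (2 * m)%N%:Z)) in
      (ab.1, ab.2 + c *: 'X^m)
    else
      let ab := dec_aux h k' (fun n => S n - c * lconst 1 (n - (2 * m)%N%:Z)) in
      (ab.1 + c *: 'X^m, ab.2)
  end.

Definition decomp (h : nat -> R) (d : nat) (S : lser R) := dec_aux h d S.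

(* V^(j): first row (p_j, q_j) with H^(j) = p_j + q_j h,
          second row (a_j, b_j) with S_j = a_j + b_j h. *)
Definition Vmx (h : nat -> R) (j : nat) : 'M[{poly R}]_2 :=
  let pq := decomp h j (Hser h j) in
  let ab := decomp h j.+1 (Sser h j) in
  \matrix_(r < 2, s < 2)
    if (r == 0 :> nat) then (if (s == 0 :> nat) then pq.1 else pq.2)
    else (if (s == 0 :> nat) then ab.1 else ab.2).

End Series.

Section Tangent.
Variable R : comNzRingType.

(* h + eps w, with coefficients in R[eps] (= {poly R}) *)
Definition dualseq (h w : nat -> R) : nat -> {poly R} :=
  fun l => (h l)%:P + (w l)%:P * 'X.

(* differential of h |-> V^(j)(h) at h in direction w: the eps-linear part of
   V^(j)(h + eps w) *)
Definition dVmx (h w : nat -> R) (j : nat) : 'M[{poly R}]_2 :=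
  map_mx (map_poly (fun p : {poly R} => p`_1)) (Vmx (dualseq h w) j).

Definition mcomm (P Q : 'M[{poly R}]_2) : 'M[{poly R}]_2 := P *m Q - Q *m P.

Definition Amx : 'M[{poly R}]_2 :=
  \matrix_(r < 2, s < 2) ((r == 1 :> nat) && (s == 0 :> nat))%:R.

(* (lambda^{-k} X(lambda))_+ *)
Definition pluspart (k : nat) (X : 'M[{poly R}]_2) : 'M[{poly R}]_2 :=
  map_mx (drop_poly k) X.

End Tangent.

(* Main.v *)
Require Import Defs.
From mathcomp Require Import all_boot all_order all_algebra.
From mathcomp Require Import zify ring.
From Stdlib Require Import FunctionalExtensionality.
Import Order.TTheory GRing.Theory Num.Theory.
Local Open Scope ring_scope.
Set Implicit Arguments. Unset Strict Implicit. Unset Printing Implicit Defensive.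


Lemma natpK (x : int) : 0 <= x -> (natp x)%:Z = x.
Proof. by case: x. Qed.
Lemma natp_le0 (x : int) : x <= 0 -> natp x = 0%N.
Proof. by case: x => // -[]. Qed.
Lemma natp_of (y : int) (m : nat) : y = m%:Z -> natp y = m.
Proof. by move->. Qed.

Section Basic.
Variable R : comNzRingType.
Implicit Types (S T U : lser R) (a b p q : {poly R}).

Definition bnd (d : int) S := forall n : int, d < n -> S n = 0.

Lemma bnd_le d d' S : d <= d' -> bnd d S -> bnd d' S.
Proof. move=> le H n ltn; apply: H; lia. Qed.

Lemma lmul_gt d e S T n : d + e < n -> lmul d e S T n = 0.
Proof. by move=> H; rewrite /lmul natp_le0 ?big_ord0 //; lia. Qed.

Lemma lmul_bndS d e S T : bnd d S -> forall n, lmul (d + 1) e S T n = lmul d e S T n.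
Proof.
move=> hS n; rewrite /lmul.
case: (lerP 0 (d + e - n + 1)) => hx; last first.
  by rewrite !natp_le0 ?big_ord0 //; lia.
have hN := natpK hx; set N := natp _ in hN *.
rewrite (@natp_of _ N.+1); last lia.
rewrite big_ord_recl hS ?mul0r ?add0r; last by rewrite /= subr0; lia.
apply: eq_bigr => k _; rewrite /bump /=.
have -> : bump 0 k = k.+1 by []. by congr (S _ * T _); lia.
Qed.

Lemma lmul_bnd_le d d' e S T : bnd d S -> d <= d' -> forall n, lmul d' e S T n = lmul d e S T n.
Proof.
move=> hS hd n.
have [k ->] : exists k : nat, d' = d + k%:Z.
  by exists (natp (d' - d)); rewrite natpK; lia.
elim: k => [|k IH]; first by rewrite addr0.
have -> : d + (k.+1)%:Z = (d + k%:Z) + 1 by lia.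
rewrite lmul_bndS // => m hm; apply: hS; lia.
Qed.

Lemma lmul_comm d e S T n : lmul d e S T n = lmul e d T S n.
Proof.
rewrite /lmul.
case: (lerP 0 (d + e - n + 1)) => hx; last first.
  by rewrite !natp_le0 ?big_ord0 //; lia.
have -> : e + d - n + 1 = d + e - n + 1 by lia.
have hN := natpK hx; set N := natp _ in hN *.
rewrite (reindex_inj rev_ord_inj) /=.
apply: eq_bigr => k _; rewrite mulrC.
have hk := ltn_ord k.
by congr (T _ * S _); lia.
Qed.

Lemma lmul_bnd d d' e e' S T : bnd d S -> bnd e T -> d <= d' -> e <= e' ->
  forall n, lmul d' e' S T n = lmul d e S T n.
Proof.
move=> hS hT hd he n.
rewrite (lmul_bnd_le _ _ hS hd) lmul_comm (lmul_bnd_le _ _ hT he) lmul_comm //.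
Qed.

Lemma lmul_bnd_res d e S T : bnd (d + e) (lmul d e S T).
Proof. by move=> n hn; rewrite lmul_gt. Qed.

Lemma lmulDl d e S S' T n :
  lmul d e (fun m => S m + S' m) T n = lmul d e S T n + lmul d e S' T n.
Proof. by rewrite /lmul -big_split; apply: eq_bigr => k _; rewrite mulrDl. Qed.

Lemma lmulNl d e S T n :
  lmul d e (fun m => - S m) T n = - lmul d e S T n.
Proof. by rewrite /lmul -sumrN; apply: eq_bigr => k _; rewrite mulNr. Qed.

Lemma lmulZl d e c S T n :
  lmul d e (fun m => c * S m) T n = c * lmul d e S T n.
Proof. by rewrite /lmul mulr_sumr; apply: eq_bigr => k _; rewrite mulrA. Qed.

Lemma lmul0l d e T n : lmul d e (fun _ => 0) T n = 0.
Proof. by rewrite /lmul big1 // => k _; rewrite mul0r. Qed.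

Lemma lmul_ext d e S S' T T' n : S =1 S' -> T =1 T' -> lmul d e S T n = lmul d e S' T' n.
Proof. by move=> e1 e2; rewrite /lmul; apply: eq_bigr => k _; rewrite e1 e2. Qed.

Lemma lmul_unit t T : bnd t T -> forall n, lmul 0 t (lconst 1) T n = T n.
Proof.
move=> hT n; rewrite /lmul.
case: (lerP 0 (0 + t - n + 1)) => hx; last first.
  rewrite natp_le0 ?big_ord0 ?hT //; lia.
have hN := natpK hx.
case E: (natp _) hN => [|N] hN; first by rewrite big_ord0 hT //; lia.
rewrite big_ord_recl /= /lconst /= mul1r big1 ?addr0; first by congr T; lia.
by move=> k _; rewrite mul0r.
Qed.
Lemma lmul_shift d t s S T n :
  lmul (d + s) t (fun m => S (m - s)) T n = lmul d t S T (n - s).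
Proof.
rewrite /lmul.
have -> : d + s + t - n + 1 = d + t - (n - s) + 1 by lia.
by apply: eq_bigr => k _; congr (S _ * T _); lia.
Qed.

Lemma triangle (F : nat -> nat -> R) N :
  \sum_(k < N) \sum_(a < k.+1) F a (k - a)%N = \sum_(a < N) \sum_(b < N - a) F a b.
Proof.
elim: N => [|N IH]; first by rewrite !big_ord0.
rewrite big_ord_recr /= IH.
have -> : \sum_(a < N.+1) \sum_(b < N.+1 - a) F a b =
          \sum_(a < N.+1) (\sum_(b < N - a) F a b + F a (N - a)%N).
  apply: eq_bigr => a _; have ha := ltn_ord a.
  by rewrite subSn // big_ord_recr.
rewrite big_split /=; congr (_ + _).
by rewrite [in RHS]big_ord_recr /= subnn big_ord0 addr0.
Qed.

Lemma lmulA d e f S T U n :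
  lmul (d + e) f (lmul d e S T) U n = lmul d (e + f) S (lmul e f T U) n.
Proof.
rewrite {1}/lmul [in RHS]/lmul.
have -> : d + (e + f) - n + 1 = d + e + f - n + 1 by lia.
case: (lerP 0 (d + e + f - n + 1)) => hx; last first.
  by rewrite !natp_le0 ?big_ord0 //; lia.
have hN := natpK hx; set N := natp _ in hN *.
pose F (a b : nat) := S (d - a%:Z) * T (e - b%:Z) * U (n - d - e + a%:Z + b%:Z).
transitivity (\sum_(k < N) \sum_(a < k.+1) F a (k - a)%N).
  apply: eq_bigr => k _; rewrite /lmul mulr_suml.
  rewrite (@natp_of _ k.+1); last lia.
  apply: eq_bigr => a _; have ha := ltn_ord a; rewrite /F.
  by congr (S _ * T _ * U _); lia.
rewrite triangle; apply: eq_bigr => a _; have ha := ltn_ord a.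
rewrite /lmul mulr_sumr.
rewrite (@natp_of _ (N - a)%N); last lia.
apply: eq_bigr => b _; rewrite /F mulrA.
by congr (S _ * T _ * U _); lia.
Qed.
Lemma lmul_bnd_any D D' e S T : bnd D S -> bnd D' S -> forall n, lmul D e S T n = lmul D' e S T n.
Proof.
move=> h1 h2 n; case: (lerP D D') => hD.
  by rewrite (lmul_bnd_le _ _ h1 hD).
by rewrite (lmul_bnd_le _ _ h2 (ltW hD)).
Qed.

Definition polymul a S : lser R :=
  fun n => \sum_(0 <= k < size a) a`_k * S (n - (2 * k)%N%:Z).

Lemma polymul_big N a S n : (size a <= N)%N ->
  polymul a S n = \sum_(0 <= k < N) a`_k * S (n - (2 * k)%N%:Z).
Proof.
move=> hN; rewrite /polymul (big_cat_nat (leq0n _) hN) /=.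
rewrite [X in _ = _ + X]big_nat_cond [X in _ = _ + X]big1 ?addr0 // => k /andP[/andP[hk _] _].
by rewrite nth_default ?mul0r.
Qed.

Lemma polymulD a b S n : polymul (a + b) S n = polymul a S n + polymul b S n.
Proof.
set N := maxn (size a) (size b).
rewrite !(@polymul_big N) ?leq_maxl ?leq_maxr ?(leq_trans (size_polyD _ _)) //.
by rewrite -big_split; apply: eq_bigr => k _; rewrite coefD mulrDl.
Qed.

Lemma polymulN a S n : polymul (- a) S n = - polymul a S n.
Proof.
by rewrite /polymul size_polyN -sumrN; apply: eq_bigr => k _; rewrite coefN mulNr.
Qed.

Lemma polymulB a b S n : polymul (a - b) S n = polymul a S n - polymul b S n.
Proof. by rewrite polymulD polymulN. Qed.

Lemma polymul0 S n : polymul 0 S n = 0.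
Proof. by rewrite /polymul size_poly0 big_geq. Qed.

Lemma polymulCM c a S n : polymul (c%:P * a) S n = c * polymul a S n.
Proof.
rewrite mul_polyC (@polymul_big (size a)) ?size_scale_leq //.
by rewrite mulr_sumr; apply: eq_bigr => k _; rewrite coefZ mulrA.
Qed.

Lemma polymulC c S n : polymul c%:P S n = c * S n.
Proof.
rewrite (@polymul_big 1) ?size_polyC ?leq_b1 // big_nat1 /= coefC /=.
by rewrite muln0 subr0.
Qed.

Lemma polymulMX p S n : polymul (p * 'X) S n = polymul p S (n - 2).
Proof.
rewrite (@polymul_big (size p).+1); last first.
  by rewrite (leq_trans (size_polyMleq _ _)) // size_polyX addn2.
rewrite big_nat_recl // coefMX eqxx mul0r add0r /polymul.
apply: eq_bigr => k _; rewrite coefMX /=; congr (_ * S _); lia.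
Qed.

Lemma polymul_ext a S T n : S =1 T -> polymul a S n = polymul a T n.
Proof. by move=> e; apply: eq_bigr => k _; rewrite e. Qed.

Lemma polymulDr a S T n :
  polymul a (fun m => S m + T m) n = polymul a S n + polymul a T n.
Proof. by rewrite /polymul -big_split; apply: eq_bigr => k _; rewrite mulrDr. Qed.

Lemma polymulNr a S n : polymul a (fun m => - S m) n = - polymul a S n.
Proof. by rewrite /polymul -sumrN; apply: eq_bigr => k _; rewrite mulrN. Qed.

Lemma polymulZr a c S n : polymul a (fun m => c * S m) n = c * polymul a S n.
Proof. by rewrite /polymul mulr_sumr; apply: eq_bigr => k _; rewrite mulrCA. Qed.

Lemma polymul0r a n : polymul a (fun _ => 0) n = 0.
Proof. by rewrite /polymul big1 // => k _; rewrite mulr0. Qed.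

Lemma polymulA a b S n : polymul a (polymul b S) n = polymul (a * b) S n.
Proof.
elim/poly_ind: a n => [|p c IH] n; first by rewrite mul0r !polymul0.
rewrite polymulD polymulMX polymulC IH.
have -> : (p * 'X + c%:P) * b = (p * b) * 'X + c%:P * b.
  by rewrite mulrDl mulrAC.
by rewrite polymulD polymulMX polymulCM.
Qed.

Lemma polymulXn G S n : polymul ('X^G) S n = S (n - (2 * G)%N%:Z).
Proof.
elim: G n => [|G IH] n; first by rewrite expr0 polymulC mul1r subr0.
rewrite exprSr polymulMX IH; congr S; lia.
Qed.

Lemma polymul_bnd d a S : bnd d S -> bnd (d + 2 * (size a)%:Z) (polymul a S).
Proof.
move=> hS n hn; rewrite /polymul big_nat_cond big1 // => k /andP[/andP[_ hk] _].
by rewrite hS ?mulr0 //; lia.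
Qed.

Lemma polymul_lmul a d t S T : bnd d S -> bnd t T -> forall D, bnd D (polymul a S) ->
  forall n, polymul a (lmul d t S T) n = lmul D t (polymul a S) T n.
Proof.
move=> hS hT; elim/poly_ind: a => [|p c IH] D hD n.
  rewrite polymul0 (lmul_ext _ _ (T' := T) (S' := fun _ => 0)) ?lmul0l // => m.
  by rewrite polymul0.
have hp := polymul_bnd (a:=p) hS; set Dp := d + _ in hp.
rewrite polymulD polymulMX polymulC (IH Dp hp).
rewrite -lmul_shift -lmulZl.
have hs : bnd (Dp + 2) (fun m => polymul p S (m - 2)).
  by move=> m hm; rewrite hp //; lia.
have hc : bnd d (fun m => c * S m) by move=> m hm; rewrite hS ?mulr0.
have hd : d <= Dp + 2 by rewrite /Dp; lia.
rewrite -[X in _ + X](lmul_bnd hc hT hd (lexx t)).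
rewrite -lmulDl.
have hpc : bnd (Dp + 2) (polymul (p * 'X + c%:P) S).
  move=> m hm; rewrite polymulD polymulMX polymulC hp ?hS ?mulr0 ?addr0 //; rewrite /Dp in hm; lia.
rewrite (lmul_bnd_any _ _ hD hpc); apply: lmul_ext => // m.
by rewrite polymulD polymulMX polymulC.
Qed.

Definition Wser (h : nat -> R) a b : lser R :=
  fun n => polymul a (lconst 1) n + polymul b (hser h) n.

End Basic.


Section W.
Variable R : comNzRingType.
Variable h : nat -> R.
Implicit Types (S T U : lser R) (a b p q : {poly R}).

Lemma hser_pos n : 0 <= n -> hser h n = (n == 1)%:R.
Proof. by case: n => // N _; rewrite /hser; case: ifP. Qed.

Lemma hser_neg k : hser h (Negz k) = h k.+1.
Proof. by []. Qed.

Lemma lconstE (c : R) n : lconst c n = if n == 0 then c else 0.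
Proof. by []. Qed.

Lemma WserD a a' b b' n : Wser h (a + a') (b + b') n = Wser h a b n + Wser h a' b' n.
Proof. rewrite /Wser !polymulD; ring. Qed.

Lemma WserN a b n : Wser h (- a) (- b) n = - Wser h a b n.
Proof. rewrite /Wser !polymulN; ring. Qed.

Lemma WserB a a' b b' n : Wser h (a - a') (b - b') n = Wser h a b n - Wser h a' b' n.
Proof. by rewrite WserD WserN. Qed.

Lemma Wser0 n : Wser h 0 0 n = 0.
Proof. by rewrite /Wser !polymul0 addr0. Qed.

Lemma WserCM c a b n : Wser h (c%:P * a) (c%:P * b) n = c * Wser h a b n.
Proof. rewrite /Wser !polymulCM; ring. Qed.

Lemma WserMX a b n : Wser h (a * 'X) (b * 'X) n = Wser h a b (n - 2).
Proof. by rewrite /Wser !polymulMX. Qed.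

Lemma Wser_polymul p a b n : Wser h (p * a) (p * b) n = polymul p (Wser h a b) n.
Proof. by rewrite /Wser polymulDr !polymulA. Qed.

Lemma WserC c1 c2 n : Wser h c1%:P c2%:P n = c1 * lconst 1 n + c2 * hser h n.
Proof. by rewrite /Wser !polymulC. Qed.

Lemma boolR0 (c : bool) : ~~ c -> c%:R = 0 :> R.
Proof. by case: c. Qed.
Lemma boolR1 (c : bool) : c -> c%:R = 1 :> R.
Proof. by case: c. Qed.

Lemma sum_single (F : nat -> R) m N : (forall k, k != m -> F k = 0) ->
  \sum_(0 <= k < N) F k = if (m < N)%N then F m else 0.
Proof.
move=> hF; elim: N => [|N IH]; first by rewrite big_geq.
rewrite big_nat_recr //= IH.
case: (eqVneq m N) => [->|hmN]; first by rewrite ltnn ltnSn add0r.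
rewrite (hF N); last by rewrite eq_sym.
by rewrite addr0 ltnS [in RHS]leq_eqVlt (negbTE hmN).
Qed.

Lemma W_unique a b : (forall N : nat, Wser h a b N = 0) -> a = 0 /\ b = 0.
Proof.
move=> hW.
set B := maxn (size a) (size b).
suff H : forall t k, (B - t <= k)%N -> a`_k = 0 /\ b`_k = 0.
  split; apply/polyP => k; rewrite coef0; have [] := H B k; rewrite ?subnn //.
elim=> [|t IH] k hk.
  rewrite subn0 in hk.
  by rewrite !nth_default // (leq_trans _ hk) // ?leq_maxl ?leq_maxr.
case: (leqP (B - t) k) => hk'; first exact: IH.
have ek : k = (B - t.+1)%N by lia.
have hz : forall k', (k < k')%N -> a`_k' = 0 /\ b`_k' = 0.
  by move=> k' hk''; apply: IH; lia.
have hb : b`_k = 0.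
  have := hW (2 * k).+1.
  rewrite /Wser (polymul_big (N := B)) ?leq_maxl //.
  rewrite (polymul_big (N := B)) ?leq_maxr //.
  rewrite (@sum_single _ k); last first.
    move=> k' _; rewrite lconstE ifF ?mulr0 //; apply/negbTE; lia.
  rewrite (@sum_single _ k); last first.
    move=> k' hk'k; case: (ltnP k k') => hkk.
      by rewrite (hz _ hkk).2 mul0r.
    rewrite hser_pos; last lia.
    by rewrite boolR0 ?mulr0 //; lia.
  rewrite !ifT; [|lia|lia].
  rewrite lconstE ifF ?mulr0 ?add0r; last by apply/negbTE; lia.
  rewrite hser_pos; last lia.
  by rewrite boolR1 ?mulr1 //; lia.
split => //.
have := hW (2 * k)%N.
rewrite /Wser (polymul_big (N := B)) ?leq_maxl //.
rewrite (polymul_big (N := B)) ?leq_maxr //.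
rewrite (@sum_single _ k); last first.
  move=> k' hk'k; rewrite lconstE ifF ?mulr0 //; apply/negbTE; lia.
rewrite [X in _ + X](@sum_single _ k); last first.
  move=> k' hk'k; case: (ltnP k k') => hkk.
    by rewrite (hz _ hkk).2 mul0r.
  rewrite hser_pos; last lia.
  by rewrite boolR0 ?mulr0 //; lia.
rewrite !ifT; [|lia|lia].
by rewrite hb mul0r addr0 lconstE ifT ?mulr1 //; lia.
Qed.

Lemma polymulZXn c m S n : polymul (c *: 'X^m) S n = c * S (n - (2 * m)%N%:Z).
Proof. by rewrite -mul_polyC polymulCM polymulXn. Qed.

Lemma dec_correct d S : bnd d%:Z S ->
  forall N : nat, S N = Wser h (dec_aux h d S).1 (dec_aux h d S).2 N.
Proof.
elim: d S => [|k IH] S hS N.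
  rewrite /= /Wser polymulC polymul0 addr0 lconstE.
  case: N => [|N]; first by rewrite mulr1.
  by rewrite mulr0 hS //; lia.
rewrite /=.
have hd := odd_double_half k.+1; rewrite -muln2 in hd.
set m := (k.+1)./2 in hd *.
set c := S (k.+1)%:Z.
case: ifP => ho; move: hd; rewrite /= ho /= => hd.
  set S' := fun n => _.
  have hS' : bnd k S'.
    move=> n hn; rewrite /S'.
    case: (eqVneq n (k.+1)%:Z) => [->|hn'].
      rewrite hser_pos; last lia.
      by rewrite boolR1 ?mulr1 ?subrr //; lia.
    rewrite hS; last lia.
    rewrite hser_pos; last lia.
    by rewrite boolR0 ?mulr0 ?subrr //; lia.
  rewrite /Wser polymulD polymulZXn addrA.
  have := IH S' hS' N; rewrite /Wser => <-.
  by rewrite /S' subrK.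
set S' := fun n => _.
have hS' : bnd k S'.
  move=> n hn; rewrite /S'.
  case: (eqVneq n (k.+1)%:Z) => [->|hn'].
    by rewrite lconstE ifT ?mulr1 ?subrr //; lia.
  rewrite hS; last lia.
  by rewrite lconstE ifF ?mulr0 ?subrr //; apply/negbTE; lia.
rewrite /Wser polymulD polymulZXn addrAC.
have := IH S' hS' N; rewrite /Wser => <-.
by rewrite /S' subrK.
Qed.

Definition inW S := exists a b, forall n, S n = Wser h a b n.

Lemma inW_ext S T : (forall n, S n = T n) -> inW T -> inW S.
Proof. by move=> e [a [b hab]]; exists a, b => n; rewrite e. Qed.

Lemma inW_add S T : inW S -> inW T -> inW (fun n => S n + T n).
Proof.
move=> [a [b hS]] [a' [b' hT]]; exists (a + a'), (b + b') => n.
by rewrite WserD hS hT.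
Qed.

Lemma inW_opp S : inW S -> inW (fun n => - S n).
Proof. move=> [a [b hS]]; exists (- a), (- b) => n; by rewrite WserN hS. Qed.

Lemma inW_scale c S : inW S -> inW (fun n => c * S n).
Proof. move=> [a [b hS]]; exists (c%:P * a), (c%:P * b) => n; by rewrite WserCM hS. Qed.

Lemma inW_const c : inW (lconst c).
Proof.
exists c%:P, 0 => n; rewrite /Wser polymulC polymul0 addr0 !lconstE.
by case: ifP; rewrite ?mulr1 ?mulr0.
Qed.

Lemma inW_hser : inW (hser h).
Proof. exists 0, 1 => n; by rewrite /Wser polymul0 -polyC1 polymulC add0r mul1r. Qed.

Lemma inW_sum (r : seq nat) (F : nat -> lser R) : (forall l, inW (F l)) ->
  inW (fun n => \sum_(l <- r) F l n).
Proof.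
move=> hF; elim: r => [|x r IH].
  apply: (inW_ext (T := lconst 0)); last exact: inW_const.
  by move=> n; rewrite big_nil lconstE; case: ifP.
apply: (inW_ext (T := fun n => F x n + \sum_(l <- r) F l n)); last exact: inW_add.
by move=> n; rewrite big_cons.
Qed.

Lemma inW_shift2 S : inW S -> inW (fun n => S (n - 2)).
Proof. move=> [a [b hS]]; exists (a * 'X), (b * 'X) => n; by rewrite WserMX hS. Qed.

Lemma Hser0 : Hser h 0%N = lconst (1 : R). Proof. by []. Qed.
Lemma Hser1 : Hser h 1%N = hser h. Proof. by []. Qed.
Lemma Hser2 : Hser h 2%N = Defs.lshift 2 (lconst (1 : R)). Proof. by []. Qed.
Lemma HserSSS k : Hser h k.+3 = Hstep h (Hser h k.+1). Proof. by []. Qed.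

Lemma Hser_ind (P : nat -> Prop) : P 0%N -> P 1%N -> P 2%N ->
  (forall k, P k.+1 -> P k.+3) -> forall k, P k.
Proof.
move=> h0 h1 h2 hS k.
suff : P k /\ P k.+1 /\ P k.+2 by case.
elim: k => [|k [_ [IH1 IH2]]]; first by [].
split => //; split => //.
by apply: hS.
Qed.

Lemma Hser_nonneg k (N : nat) : Hser h k N = (N == k)%:R.
Proof.
elim/Hser_ind: k N => [N|N|N|k IH N].
- by rewrite Hser0 lconstE; case: N.
- by rewrite Hser1 hser_pos.
- rewrite Hser2 /Defs.lshift lconstE.
  by case: N => [|[|[|N]]].
rewrite HserSSS /Hstep.
case: N => [|[|N]].
- by rewrite hser_pos // lconstE /= mulr0 mulr1 subr0 subrr.
- by rewrite hser_pos // lconstE /= mulr1 mulr0 subr0 subrr.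
rewrite hser_pos // lconstE /= mulr0 mulr0 !subr0.
have -> : (N.+2)%:Z - 2 = N%:Z by lia.
by rewrite IH.
Qed.

Lemma Hser_bnd k : bnd k%:Z (Hser h k).
Proof.
move=> n hn; have [N eN] : exists N : nat, n = N%:Z by exists (natp n); rewrite natpK; lia.
rewrite eN in hn *.
by rewrite Hser_nonneg boolR0 //; lia.
Qed.

Lemma Hser_W k : inW (Hser h k).
Proof.
elim/Hser_ind: k => [|||k IH].
- exact: inW_const.
- exact: inW_hser.
- apply: (inW_ext (T := fun n => lconst 1 (n - 2))) => //.
  exact/inW_shift2/inW_const.
rewrite HserSSS /Hstep.
apply: inW_add; last exact/inW_opp/inW_scale/inW_const.
apply: inW_add; last exact/inW_opp/inW_scale/inW_hser.
exact: inW_shift2.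
Qed.

Lemma Sser_W j : inW (Sser h j).
Proof.
rewrite /Sser; apply: inW_add; last exact/inW_scale/inW_const.
apply: inW_add; first exact: Hser_W.
apply: inW_sum => l; exact/inW_scale/Hser_W.
Qed.

Lemma Sser_bnd j : bnd (j.+1)%:Z (Sser h j).
Proof.
move=> n hn; have [N eN] : exists N : nat, n = N%:Z by exists (natp n); rewrite natpK; lia.
rewrite eN in hn *.
rewrite /Sser Hser_nonneg lconstE ifF ?mulr0 ?addr0; last by apply/negbTE; lia.
rewrite boolR0 ?add0r; last by lia.
rewrite big_nat_cond big1 // => l /andP[/andP[hl1 hl2] _].
by rewrite Hser_nonneg boolR0 ?mulr0 //; lia.
Qed.

Lemma decW d S : bnd d%:Z S -> inW S ->
  forall n, S n = Wser h (dec_aux h d S).1 (dec_aux h d S).2 n.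
Proof.
move=> hb [a [b hab]].
have [ea eb] : a - (dec_aux h d S).1 = 0 /\ b - (dec_aux h d S).2 = 0.
  by apply: W_unique => N; rewrite WserB -hab -dec_correct // subrr.
move=> n; rewrite hab.
by move/eqP: ea; rewrite subr_eq0 => /eqP <-; move/eqP: eb; rewrite subr_eq0 => /eqP <-.
Qed.

End W.


Section F.
Variable R : comNzRingType.
Variable h : nat -> R.
Implicit Types (S T U : lser R) (a b p q : {poly R}).

Lemma lmulE d e S T n : lmul d e S T n =
  \sum_(0 <= k < natp (d + e - n + 1)) S (d - k%:Z) * T (n - d + k%:Z).
Proof. by rewrite /lmul big_mkord. Qed.

Lemma sum_single_in (F : nat -> R) m N : (forall k, (k < N)%N -> k != m -> F k = 0) ->
  \sum_(0 <= k < N) F k = if (m < N)%N then F m else 0.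
Proof.
move=> hF.
rewrite (eq_big_nat _ _ (F2 := fun k => if (k < N)%N then F k else 0)); last first.
  by move=> k /andP[_ ->].
rewrite (@sum_single _ _ m); last by move=> k hk; case: ifP => // hkN; apply: hF.
by case: ifP => //= ->.
Qed.

Lemma sum_from1 (F : nat -> R) N :
  \sum_(1 <= l < N.+1) F l = \sum_(0 <= l < N.+1) (if l == 0%N then 0 else F l).
Proof.
rewrite [in RHS]big_ltn //= add0r; apply: eq_big_nat => l /andP[hl _].
by rewrite ifF //; apply/negbTE; lia.
Qed.

Lemma Sser_nonneg j (N : nat) : Sser h j N =
  (N == j.+1)%:R + (if (N < j)%N then h (j - N)%N else 0) + Hc h j 1 * (N == 0)%N%:R.
Proof.
rewrite /Sser Hser_nonneg lconstE.
have -> : (N%:Z == 0) = (N == 0)%N by [].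
congr (_ + _ + _); last by case: (N == 0)%N; rewrite ?mulr1 ?mulr0.
under eq_bigr => l _ do rewrite Hser_nonneg.
rewrite sum_from1.
case: (ltnP N j) => hN.
  rewrite (@sum_single_in _ (j - N)%N); last first.
    move=> l hlN hl; case: ifP => // hl0; rewrite boolR0 ?mulr0 //; lia.
  rewrite ifT; last lia.
  rewrite ifF; last by apply/negbTE; lia.
  by rewrite boolR1 ?mulr1 //; lia.
rewrite big_nat_cond big1 // => l /andP[/andP[_ hl] _].
case: ifP => // hl0; rewrite boolR0 ?mulr0 //; lia.
Qed.

Lemma lmul_hser_nonneg j (N : nat) : lmul 1 j%:Z (hser h) (Hser h j) N = Sser h j N.
Proof.
case: (ltnP (j.+1) N) => hN.
  rewrite lmul_gt; last lia. by rewrite (@Sser_bnd _ h j) //; lia.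
rewrite lmulE (@natp_of _ (j.+2 - N)%N); last lia.
have -> : (j.+2 - N = (j.+1 - N).+1)%N by lia.
rewrite big_ltn // hser_pos // eqxx mul1r.
have e0 : Hser h j (N%:Z - 1 + 0%:Z) = Hc h j 1 * (N == 0)%N%:R + (N == j.+1)%:R.
  case: N hN => [|N] hN.
    by rewrite mulr1 boolR0 // !addr0 /Hc sub0r.
  rewrite mulr0 add0r.
  have -> : (N.+1)%:Z - 1 + 0%:Z = N%:Z by lia.
  by rewrite Hser_nonneg.
rewrite e0 Sser_nonneg.
set K := (j.+1 - N)%N.
rewrite (_ : \sum_(1 <= k < K.+1) _ = if (N < j)%N then h (j - N)%N else 0).
  ring.
rewrite sum_from1.
case: (ltnP N j) => hNj.
  rewrite (@sum_single_in _ (j.+1 - N)%N); last first.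
    move=> k hkK hk; case: ifP => // hk0.
    case: (eqVneq k 1%N) => [->|hk1].
      by rewrite hser_pos // boolR0 ?mul0r.
    have -> : (1 - k%:Z) = Negz (k.-2) by lia.
    have -> : N%:Z - 1 + k%:Z = ((N + k).-1)%:Z by lia.
    rewrite hser_neg Hser_nonneg boolR0 ?mulr0 //; lia.
  rewrite ifT; last lia.
  rewrite ifF; last by apply/negbTE; lia.
  have -> : (1 - (j.+1 - N)%N%:Z) = Negz ((j.+1 - N).-2) by lia.
  have -> : N%:Z - 1 + (j.+1 - N)%N%:Z = ((N + (j.+1 - N)).-1)%:Z by lia.
  rewrite hser_neg Hser_nonneg boolR1 ?mulr1; last lia.
  by congr h; lia.
rewrite big_nat_cond big1 // => k /andP[/andP[_ hk] _].
case: ifP => // hk0.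
case: (eqVneq k 1%N) => [->|hk1].
  by rewrite hser_pos // boolR0 ?mul0r.
have -> : N%:Z - 1 + k%:Z = ((N + k).-1)%:Z by lia.
rewrite Hser_nonneg boolR0 ?mulr0 //; lia.
Qed.

Lemma flow_nonneg j (N : nat) : flow h j N = 0.
Proof. by rewrite /flow lmul_hser_nonneg addNr. Qed.

Lemma flow_bnd j : bnd (-1) (flow h j).
Proof.
move=> n hn; have [N eN] : exists N : nat, n = N%:Z by exists (natp n); rewrite natpK; lia.
by rewrite eN flow_nonneg.
Qed.

Lemma Sser_flow j n : Sser h j n = lmul 1 j%:Z (hser h) (Hser h j) n + flow h j n.
Proof. by rewrite /flow addrA subrr add0r. Qed.

Definition Wrow (M : 'M[{poly R}]_2) (r : 'I_2) : lser R := Wser h (M r 0) (M r 1).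

Lemma Vmx_row0 j n : Wrow (Vmx h j) 0 n = Hser h j n.
Proof.
rewrite /Wrow /Vmx !mxE /=.
by rewrite -(decW (@Hser_bnd _ h j) (@Hser_W _ h j)).
Qed.

Lemma Vmx_row1 j n : Wrow (Vmx h j) 1 n = Sser h j n.
Proof.
rewrite /Wrow /Vmx !mxE /=.
by rewrite -(decW (@Sser_bnd _ h j) (@Sser_W _ h j)).
Qed.

Lemma Wrow_mul (P Q : 'M[{poly R}]_2) r n :
  Wrow (P *m Q) r n = polymul (P r 0) (Wrow Q 0) n + polymul (P r 1) (Wrow Q 1) n.
Proof.
rewrite /Wrow !mxE !big_ord_recl !big_ord0 !addr0.
rewrite WserD !Wser_polymul //.
have e0 : (ord0 : 'I_2) = 0 by apply: val_inj.
have e1 : lift ord0 (ord0 : 'I_1) = 1 :> 'I_2 by apply: val_inj.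
by rewrite e0 e1.
Qed.

Lemma Wrow_add (P Q : 'M[{poly R}]_2) r n : Wrow (P + Q) r n = Wrow P r n + Wrow Q r n.
Proof. by rewrite /Wrow !mxE WserD. Qed.

Lemma Wrow_opp (P : 'M[{poly R}]_2) r n : Wrow (- P) r n = - Wrow P r n.
Proof. by rewrite /Wrow !mxE WserN. Qed.

Lemma Wrow_sub (P Q : 'M[{poly R}]_2) r n : Wrow (P - Q) r n = Wrow P r n - Wrow Q r n.
Proof. by rewrite Wrow_add Wrow_opp. Qed.

End F.


Section Nat.
Variables (R R' : comNzRingType) (f : {rmorphism R -> R'}) (h : nat -> R).
Let hf := fun l => f (h l).

Lemma hser_map n : hser hf n = f (hser h n).
Proof. by rewrite /hser; case: ifP => _; [rewrite rmorph1 | case: n => //= _; rewrite rmorph0]. Qed.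

Lemma lconst_map c n : lconst (f c) n = f (lconst c n).
Proof. by rewrite /lconst; case: ifP; rewrite ?rmorph0. Qed.

Lemma Hstep_map A A' : (forall n, A' n = f (A n)) ->
  forall n, Hstep hf A' n = f (Hstep h A n).
Proof.
move=> e n; rewrite /Hstep !e rmorphB rmorphB !rmorphM hser_map.
by rewrite -lconst_map rmorph1.
Qed.

Lemma Hpair_map k : (forall n, (Hpair hf k).1 n = f ((Hpair h k).1 n)) /\
                    (forall n, (Hpair hf k).2 n = f ((Hpair h k).2 n)).
Proof.
elim: k => [|k [IH1 IH2]].
  by split=> n /=; [rewrite -lconst_map rmorph1 | rewrite hser_map].
rewrite /=; case: eqP => _ /=; split => // n.
- exact: hser_map.
- by rewrite /Defs.lshift -lconst_map rmorph1.
- exact: Hstep_map.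
Qed.

Lemma Hser_map k n : Hser hf k n = f (Hser h k n).
Proof. exact: (Hpair_map k).1. Qed.

Lemma Sser_map j n : Sser hf j n = f (Sser h j n).
Proof.
rewrite /Sser /Hc rmorphD rmorphD rmorphM rmorph_sum !Hser_map -lconst_map rmorph1.
congr (_ + _ + _); apply: eq_bigr => l _; by rewrite rmorphM Hser_map.
Qed.

Lemma lmul_map d e S T n : lmul d e (fun m => f (S m)) (fun m => f (T m)) n = f (lmul d e S T n).
Proof. by rewrite /lmul rmorph_sum; apply: eq_bigr => k _; rewrite rmorphM. Qed.

Lemma flow_map j n : flow hf j n = f (flow h j n).
Proof.
rewrite /flow rmorphD rmorphN -lmul_map Sser_map; congr (- _ + _).
by apply: lmul_ext => m; rewrite ?hser_map ?Hser_map.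
Qed.

Lemma map_polyZX (c : R) m : map_poly f (c *: 'X^m) = f c *: 'X^m.
Proof. by apply/polyP => i; rewrite coef_map /= !coefZ !coefXn rmorphM rmorph_nat. Qed.

Lemma dec_aux_map k S : dec_aux hf k (fun n => f (S n)) =
  (map_poly f (dec_aux h k S).1, map_poly f (dec_aux h k S).2).
Proof.
elim: k S => [|k IH] S; first by rewrite /= map_polyC map_poly0.
rewrite /=; case: ifP => _.
  rewrite (_ : (fun n => _) = (fun n => f (S n - S (k.+1)%:Z * hser h (n - (2 * (k.+1)./2)%N%:Z)))).
    by rewrite IH /=; f_equal; rewrite [RHS]raddfD; congr (_ + _); exact: (esym (map_polyZX _ _)).
  by apply: functional_extensionality => n; rewrite rmorphB rmorphM hser_map.
rewrite (_ : (fun n => _) = (fun n => f (S n - S (k.+1)%:Z * lconst 1 (n - (2 * (k.+1)./2)%N%:Z)))).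
  by rewrite IH /=; f_equal; rewrite [RHS]raddfD; congr (_ + _); exact: (esym (map_polyZX _ _)).
by apply: functional_extensionality => n; rewrite rmorphB rmorphM -lconst_map rmorph1.
Qed.

Lemma Vmx_map j : map_mx (map_poly f) (Vmx h j) = Vmx hf j.
Proof.
apply/matrixP => r s; rewrite !mxE /decomp.
have e1 : Hser hf j = (fun n => f (Hser h j n)) by apply: functional_extensionality => n; exact: Hser_map.
have e2 : Sser hf j = (fun n => f (Sser h j n)) by apply: functional_extensionality => n; exact: Sser_map.
rewrite e1 e2 !dec_aux_map /=.
by case: ifP => _; case: ifP => _.
Qed.

End Nat.

Section Coef.
Variable R : comNzRingType.
Implicit Types (S T : lser {poly R}).
Definition c0 (S : lser {poly R}) : lser R := fun n => (S n)`_0.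
Definition c1 (S : lser {poly R}) : lser R := fun n => (S n)`_1.

Lemma coef1M (p q : {poly R}) : (p * q)`_1 = p`_0 * q`_1 + p`_1 * q`_0.
Proof. by rewrite coefM !big_ord_recl big_ord0 addr0. Qed.

Lemma lmul_c1 d e S T n : (lmul d e S T n)`_1 = lmul d e (c0 S) (c1 T) n + lmul d e (c1 S) (c0 T) n.
Proof.
rewrite /lmul coef_sum -big_split; apply: eq_bigr => k _.
by rewrite coef1M.
Qed.

Lemma size_map_le (g : {poly R} -> R) (p : {poly {poly R}}) : (size (map_poly g p) <= size p)%N.
Proof. exact: size_poly. Qed.

Lemma polymul_c1 (b : {poly {poly R}}) S n :
  (polymul b S n)`_1 = polymul (map_poly (fun p : {poly R} => p`_1) b) (c0 S) n
                     + polymul (map_poly (fun p : {poly R} => p`_0) b) (c1 S) n.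
Proof.
rewrite (@polymul_big _ (size b) (map_poly _ b)) ?size_map_le //.
rewrite (@polymul_big _ (size b) (map_poly _ b)) ?size_map_le //.
rewrite /polymul coef_sum -big_split; apply: eq_bigr => k _.
by rewrite coef1M !coef_map_id0 ?coef0 // addrC.
Qed.

End Coef.


Section PP.
Variable R : comNzRingType.
Variable h : nat -> R.
Implicit Types (S T U : lser R) (a b p q : {poly R}).

Lemma polymul_bnd2 d A a S : bnd d S -> (size a <= A)%N ->
  bnd (d + 2 * A%:Z - 2) (polymul a S).
Proof.
move=> hS hA n hn; rewrite /polymul big_nat_cond big1 // => k /andP[/andP[_ hk] _].
by rewrite hS ?mulr0 //; lia.
Qed.

Lemma Wser_bnd2 G a b : (size a <= G)%N -> (size b <= G)%N ->
  bnd (2 * G%:Z - 1) (Wser h a b).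
Proof.
move=> ha hb n hn; rewrite /Wser.
have h1 : bnd 0 (lconst (1 : R)) by move=> m hm; rewrite lconstE ifF //; apply/negbTE; lia.
have h2 : bnd 1 (hser h) by move=> m hm; rewrite hser_pos ?boolR0 //; lia.
rewrite (polymul_bnd2 h1 ha) ?(polymul_bnd2 h2 hb) ?addr0 //; lia.
Qed.

Lemma Wser_XnM G a b n : Wser h (a * 'X^G) (b * 'X^G) n = Wser h a b (n - (2 * G)%N%:Z).
Proof. by rewrite ![_ * 'X^G]mulrC Wser_polymul polymulXn. Qed.

Lemma ord2_cases (r : 'I_2) : r = 0 \/ r = 1.
Proof. by case: r => [[|[|r]] hr] //; [left|right]; apply: val_inj. Qed.

Lemma drop_row (M : 'M[{poly R}]_2) r G m :
  Wser h (drop_poly G (M r 0)) (drop_poly G (M r 1)) m =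
  Wrow h M r (m + (2 * G)%N%:Z) - Wser h (take_poly G (M r 0)) (take_poly G (M r 1)) (m + (2 * G)%N%:Z).
Proof.
rewrite /Wrow -{2}(poly_take_drop G (M r 0)) -{2}(poly_take_drop G (M r 1)).
rewrite WserD Wser_XnM addrC addKr.
by congr Wser; lia.
Qed.

Lemma pluspart_V g i : (i < g)%N ->
  exists c : R, pluspart (g - i) (Vmx h (2 * g + 1)) = Vmx h (2 * i + 1) + c%:P *: Amx R.
Proof.
move=> hi; set G := (g - i)%N; set X := Vmx h _; set V := Vmx h _.
have hJ : (2 * g + 1 = 2 * i + 1 + 2 * G)%N by rewrite /G; lia.
have htk : forall r, bnd (2 * G%:Z - 1) (Wser h (take_poly G (X r 0)) (take_poly G (X r 1))).
  by move=> r; apply: Wser_bnd2; exact: size_take_poly.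
have [e00 e01] : drop_poly G (X 0 0) - V 0 0 = 0 /\ drop_poly G (X 0 1) - V 0 1 = 0.
  apply: (W_unique (h := h)) => N.
  rewrite WserB drop_row (htk 0) ?subr0; last lia.
  rewrite Vmx_row0.
  have := Vmx_row0 h (2 * i + 1) N; rewrite /Wrow => ->.
  have -> : N%:Z + (2 * G)%N%:Z = (N + 2 * G)%N%:Z by lia.
  rewrite !Hser_nonneg.
  have -> : (N + 2 * G == 2 * g + 1)%N = (N == 2 * i + 1)%N by apply/eqP/eqP; lia.
  by rewrite subrr.
set E := fun n => Wser h (drop_poly G (X 1 0) - V 1 0) (drop_poly G (X 1 1) - V 1 1) n.
have hE : forall N : nat, (0 < N)%N -> E N = 0.
  move=> N hN; rewrite /E WserB drop_row (htk 1) ?subr0; last lia.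
  rewrite Vmx_row1.
  have := Vmx_row1 h (2 * i + 1) N; rewrite /Wrow => ->.
  have -> : N%:Z + (2 * G)%N%:Z = (N + 2 * G)%N%:Z by lia.
  rewrite !Sser_nonneg.
  rewrite (@boolR0 _ (N + 2 * G == 0)%N); last lia.
  rewrite (@boolR0 _ (N == 0)%N); last lia.
  rewrite !mulr0 !addr0.
  have -> : (N + 2 * G == (2 * g + 1).+1)%N = (N == (2 * i + 1).+1)%N by apply/eqP/eqP; lia.
  have -> : (N + 2 * G < 2 * g + 1)%N = (N < 2 * i + 1)%N by apply/idP/idP; lia.
  have -> : (2 * g + 1 - (N + 2 * G))%N = (2 * i + 1 - N)%N by lia.
  by rewrite subrr.
exists (E 0).
have [e10 e11] : drop_poly G (X 1 0) - V 1 0 - (E 0)%:P = 0 /\ drop_poly G (X 1 1) - V 1 1 - 0 = 0.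
  apply: (W_unique (h := h)) => N.
  rewrite WserB WserC mul0r addr0 -/(E N) lconstE.
  case: N => [|N]; first by rewrite /= mulr1 subrr.
  by rewrite hE // mulr0 subrr.
rewrite subr0 in e11.
set c := E 0 in e10 *; clearbody c X V.
apply/matrixP => r s; rewrite !mxE.
case: (ord2_cases r) => ->; case: (ord2_cases s) => -> /=.
- by apply/eqP; rewrite mulr0 addr0 -subr_eq0 e00.
- by apply/eqP; rewrite mulr0 addr0 -subr_eq0 e01.
- by apply/eqP; rewrite mulr1 -subr_eq0 opprD addrA e10.
- by apply/eqP; rewrite mulr0 addr0 -subr_eq0 e11.
Qed.

End PP.


Section Lax.
Variable R : comNzRingType.

Lemma bnd_lconst : bnd 0 (lconst (1 : R)).
Proof. by move=> m hm; rewrite lconstE ifF //; apply/negbTE; lia. Qed.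

Lemma bnd_hser (h : nat -> R) : bnd 1 (hser h).
Proof. by move=> m hm; rewrite hser_pos ?boolR0 //; lia. Qed.

Lemma key_mix (h : nat -> R) (a b : {poly R}) U T u t :
  (forall n, Wser h a b n = U n) -> bnd u U -> bnd t T ->
  forall n, polymul a T n + polymul b (lmul 1 t (hser h) T) n = lmul u t U T n.
Proof.
move=> hU hu hT n.
have h1 := bnd_lconst; have h2 := bnd_hser h.
have ha := polymul_bnd (a := a) h1.
have hb := polymul_bnd (a := b) h2.
rewrite (@polymul_ext _ a T (lmul 0 t (lconst 1) T)); last by move=> m; rewrite lmul_unit.
rewrite (polymul_lmul (a := a) h1 hT ha) (polymul_lmul (a := b) h2 hT hb).
set D := (0 + 2 * (size a)%:Z) + (1 + 2 * (size b)%:Z).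
have hDa : 0 + 2 * (size a)%:Z <= D by rewrite /D; lia.
have hDb : 1 + 2 * (size b)%:Z <= D by rewrite /D; lia.
rewrite -(lmul_bnd ha hT hDa (lexx t)) -(lmul_bnd hb hT hDb (lexx t)) -lmulDl.
have hUD : bnd D U.
  move=> m hm; rewrite -hU /Wser ha ?hb ?addr0 //; rewrite /D in hm; lia.
rewrite (lmul_bnd_any _ _ hu hUD).
by apply: lmul_ext => // m; rewrite -hU.
Qed.

Definition c0f (p : {poly R}) := p`_0.
Definition c1f (p : {poly R}) := p`_1.

Lemma Wser_c1 (ht : nat -> {poly R}) a b n :
  (Wser ht a b n)`_1 = Wser (fun l => (ht l)`_0) (map_poly c1f a) (map_poly c1f b) n
                       + polymul (map_poly c0f b) (c1 (hser ht)) n.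
Proof.
rewrite /Wser coefD !polymul_c1.
rewrite (@polymul_ext _ _ (c0 (lconst 1)) (lconst 1)); last first.
  by move=> m; rewrite /c0 !lconstE; case: ifP; rewrite ?coef1 ?coef0.
rewrite (@polymul_ext _ _ (c1 (lconst 1)) (fun _ => 0)); last first.
  by move=> m; rewrite /c1 !lconstE; case: ifP; rewrite ?coef1 ?coef0.
rewrite polymul0r addr0.
rewrite (@polymul_ext _ _ (c0 (hser ht)) (hser (fun l => (ht l)`_0))); last first.
  by move=> m; rewrite /c0 (hser_map (coefp 0)).
by rewrite addrA.
Qed.


Lemma ord2_cases' (r : 'I_2) : r = 0 \/ r = 1.
Proof. by case: r => [[|[|r]] hr] //; [left|right]; apply: val_inj. Qed.

Lemma coef1_natR (b : nat) : ((b%:R : {poly R}))`_1 = 0.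
Proof. by rewrite coefMn coef1 /= mul0rn. Qed.

Lemma lax (h : nat -> R) (J j : nat) : (forall n, flow h J n = 0) ->
  mcomm (Vmx h j) (Vmx h J) = dVmx h (flowv h j) J.
Proof.
move=> hM.
set w := flowv h j.
set ht := dualseq h w.
set Xt := Vmx ht J.
set X := Vmx h J. set V := Vmx h j.
set X' := dVmx h w J.
have eht0 : (fun l => coefp 0 (ht l)) = h.
  by apply: functional_extensionality => l; rewrite /= /ht /dualseq coefD coefC coefMX /= addr0.
have eX : forall r s, X r s = map_poly c0f (Xt r s).
  move=> r s; have := Vmx_map (coefp 0) ht J; rewrite eht0 -/X => <-.
  by rewrite mxE.
have eX' : forall r s, X' r s = map_poly c1f (Xt r s) by move=> r s; rewrite /X' /dVmx mxE.
have ec1h : forall m, c1 (hser ht) m = flow h j m.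
  case=> [N|k].
    by rewrite /c1 hser_pos // coef1_natR flow_nonneg.
  rewrite /c1 hser_neg /ht /dualseq coefD coefC coefMX /= add0r coefC /=.
  by rewrite /w /flowv NegzE.
have ec0h : forall m, c0 (hser ht) m = hser h m.
  by move=> m; rewrite /c0 -eht0 (hser_map (coefp 0)).
set H := Hser h J; set Hj := Hser h j; set fj := flow h j.
set H' := c1 (Hser ht J); set f' := c1 (flow ht J).
have eH0 : forall m, c0 (Hser ht J) m = H m.
  by move=> m; rewrite /c0 /H -eht0 (Hser_map (coefp 0)).
have eH'0 : forall N : nat, H' N = 0.
  by move=> N; rewrite /H' /c1 Hser_nonneg coef1_natR.
have ef'0 : forall N : nat, f' N = 0.
  by move=> N; rewrite /f' /c1 flow_nonneg coef0.
have D1 : forall n, Wrow h X' 0 n + polymul (X 0 1) fj n = H' n.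
  move=> n; have := congr1 (fun p : {poly R} => p`_1) (Vmx_row0 ht J n).
  rewrite /= /Wrow Wser_c1 -/Xt -!eX' -eX.
  rewrite (_ : (fun l => (ht l)`_0) = h); last exact: eht0.
  by rewrite (polymul_ext _ _ ec1h).
have D2 : forall n, Wrow h X' 1 n + polymul (X 1 1) fj n =
    lmul 1 J (hser h) H' n + lmul 1 J fj H n + f' n.
  move=> n; have := congr1 (fun p : {poly R} => p`_1) (Vmx_row1 ht J n).
  rewrite /= /Wrow Wser_c1 -/Xt -!eX' -eX.
  rewrite (_ : (fun l => (ht l)`_0) = h); last exact: eht0.
  rewrite (polymul_ext _ _ ec1h) => ->.
  rewrite Sser_flow coefD lmul_c1 -/f'.
  congr (_ + _ + _); apply: lmul_ext => m //; by rewrite ?ec0h ?ec1h ?eH0.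
have hX0 : forall n, Wser h (X 0 0) (X 0 1) n = H n by move=> n; exact: Vmx_row0.
have hX1 : forall n, Wser h (X 1 0) (X 1 1) n = lmul 1 J (hser h) H n.
  by move=> n; have := Vmx_row1 h J n; rewrite /Wrow Sser_flow hM addr0.
have hV0 : forall n, Wser h (V 0 0) (V 0 1) n = Hj n by move=> n; exact: Vmx_row0.
have hV1 : forall n, Wser h (V 1 0) (V 1 1) n = Sser h j n by move=> n; exact: Vmx_row1.
have bH : bnd J H := @Hser_bnd _ h J.
have bHj : bnd j Hj := @Hser_bnd _ h j.
have bS : bnd (j.+1) (Sser h j) := @Sser_bnd _ h j.
have bL : bnd (1 + J%:Z) (lmul 1 J (hser h) H) := @lmul_bnd_res _ 1 J (hser h) H.
set M := X' - (V *m X - X *m V).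
have hV1' : forall n, Wser h (V 1 0) (V 1 1) n = lmul 1 j (hser h) Hj n + fj n.
  by move=> n; rewrite hV1 Sser_flow.
have M0 : forall n, Wrow h M 0 n = H' n.
  move=> n; rewrite /M !Wrow_sub !Wrow_mul.
  rewrite /Wrow (polymul_ext _ _ hX0) (polymul_ext _ _ hX1) (key_mix hV0 bHj bH).
  rewrite (polymul_ext _ _ hV0) (polymul_ext _ _ hV1') polymulDr addrA (key_mix hX0 bH bHj).
  have := D1 n; rewrite /Wrow => <-.
  rewrite [lmul J j _ _ _]lmul_comm; ring.
have [m00 m01] : M 0 0 = 0 /\ M 0 1 = 0.
  by apply: (W_unique (h := h)) => N; have := M0 N; rewrite /Wrow eH'0.
have H'0 : forall n, H' n = 0 by move=> n; rewrite -M0 /Wrow m00 m01 Wser0.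
have M1 : forall n, Wrow h M 1 n = f' n.
  move=> n; rewrite /M !Wrow_sub !Wrow_mul.
  rewrite /Wrow (polymul_ext _ _ hX0) (polymul_ext _ _ hX1) (key_mix hV1 bS bH).
  rewrite (polymul_ext _ _ hV0) (polymul_ext _ _ hV1') polymulDr addrA (key_mix hX1 bL bHj).
  have := D2 n; rewrite /Wrow => e2.
  rewrite -[Wser h (X' 1 0) (X' 1 1) n](addrK (polymul (X 1 1) fj n)) e2.
  rewrite (@lmul_ext _ (j.+1)%:Z J (Sser h j) (fun m => lmul 1 j (hser h) Hj m + fj m) H H n); [|by move=> m; rewrite Sser_flow|by []].
  rewrite lmulDl.
  have hfj1 : bnd 1 fj by apply: bnd_le (@flow_bnd _ h j); lia.
  have hfj2 : bnd (j.+1) fj by apply: bnd_le (@flow_bnd _ h j); lia.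
  rewrite (lmul_bnd_any _ _ hfj2 hfj1).
  rewrite (@lmul_ext _ 1 J (hser h) (hser h) H' (fun _ => 0)) //.
  rewrite lmul_comm lmul0l.
  have -> : lmul (j.+1)%:Z J (lmul 1 j (hser h) Hj) H n = lmul (1 + J%:Z) j (lmul 1 J (hser h) H) Hj n.
    have -> : (j.+1)%:Z = 1 + j%:Z by lia.
    rewrite !lmulA [(j%:Z + J%:Z)]addrC; apply: lmul_ext => // m.
    exact: lmul_comm.
  ring.
have [m10 m11] : M 1 0 = 0 /\ M 1 1 = 0.
  by apply: (W_unique (h := h)) => N; have := M1 N; rewrite /Wrow ef'0.
have M00 : M = 0.
  apply/matrixP => r s; rewrite [RHS]mxE.
  by case: (ord2_cases' r) => ->; case: (ord2_cases' s) => ->.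
have e : X' - mcomm V X = 0 := M00.
by apply/eqP; rewrite eq_sym -subr_eq0 e.
Qed.

End Lax.

Unset Implicit Arguments.

Theorem mainTheorem6 (R : numClosedFieldType) (g : nat) (hg : (1 <= g)%N)
  (i : nat) (hi : (i < g)%N) (h : nat -> R) (hM : inM g h) :
  exists c : R,
    mcomm (pluspart (g - i) (Vmx h (2 * g + 1))) (Vmx h (2 * g + 1)) =
    dVmx h (flowv h (2 * i + 1)) (2 * g + 1)
    + c%:P *: mcomm (Amx R) (Vmx h (2 * g + 1)).
Proof.
have [c hc] := pluspart_V h hi.
exists c; rewrite hc -(@lax _ h (2 * g + 1) (2 * i + 1) hM) /mcomm.
rewrite mulmxDl mulmxDr -scalemxAl -scalemxAr scalerBr.
by rewrite opprD addrACA.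
Qed.
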